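(* Let $k\ge1$. The logic $\mathbb{L}_k^{\le}$ is a logic of formal undeterminedness with respect to $\sim$ and $\circ$: (a) $\not\models_k^{\le}p\vee\sim p$ for a propositional variable $p$ (so $\mathbb{L}_k^{\le}$ is paracomplete); (b) for a propositional variable $p$, $\circ p\not\models_k^{\le}p$ and $\circ p\not\models_k^{\le}\sim p$; (c) $\circ\alpha\models_k^{\le}\alpha\vee\sim\alpha$ for every formula $\alpha$.
   Context: A modal pseudocomplemented De Morgan algebra ($mpM$-algebra) is an algebra $\langle A,\wedge,\vee,\sim,{}^\ast,0,1\rangle$ such that $\langle A,\wedge,\vee,\sim,0,1\rangle$ is a De Morgan algebra (bounded distributive lattice with $\sim\sim x=x$, $\sim(x\vee y)=\sim x\wedge\sim y$), $x^\ast$ is the pseudocomplement of $x$, and $x\vee\sim x\le x\vee x^\ast$. A $\mathcal{C}_k$-algebra ($k\ge1$) is a pair $(A,t)$ with $A$ an $mpM$-algebra and $t$ an $mpM$-automorphism of $A$ with $t^k=\mathrm{id}$. $Fm$ is the set of formulas built from a denumerable set of variables with connectives $\wedge,\vee$ (binary), $\sim,{}^\ast,t$ (unary), $\top,\bot$ (constants); a valuation into a $\mathcal{C}_k$-algebra $(A,t)$ is a homomorphism $v:Fm\to(A,t)$ (with $v(\top)=1$, $v(\bot)=0$). The degree-preserving logic $\mathbb{L}_k^{\le}=\langle Fm,\models_k^{\le}\rangle$: for nonempty finite $\{\alpha_1,\dots,\alpha_n\}$, $\alpha_1,\dots,\alpha_n\models_k^{\le}\alpha$ iff for every $\mathcal{C}_k$-algebra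 $(A,t)$, every valuation $v$ and every $a\in A$, if $v(\alpha_i)\ge a$ for all $i$ then $v(\alpha)\ge a$; $\emptyset\models_k^{\le}\alpha$ iff $v(\alpha)=1$ for all $(A,t)$ and $v$; for infinite $\Gamma$, $\Gamma\models_k^{\le}\alpha$ iff some finite nonempty subset of $\Gamma$ entails $\alpha$. The consistency operator is $\circ\alpha=\bigwedge_{i=0}^{k}t^i\big((\sim\alpha\vee\alpha)\wedge(\alpha\wedge\sim\alpha)^\ast\big)$. *)

(* Defs.v *)
From Stdlib Require Import List.
Import ListNotations.

Record mpM := MpM {
  car :> Type;
  meet : car -> car -> car;
  join : car -> car -> car;
  neg : car -> car;
  pc : car -> car;
  zero : car;
  one : car;
  meetA : forall x y z, meet x (meet y z) = meet (meet x y) z;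
  joinA : forall x y z, join x (join y z) = join (join x y) z;
  meetC : forall x y, meet x y = meet y x;
  joinC : forall x y, join x y = join y x;
  meet_absorb : forall x y, meet x (join x y) = x;
  join_absorb : forall x y, join x (meet x y) = x;
  meet_joinDr : forall x y z, meet x (join y z) = join (meet x y) (meet x z);
  join0x : forall x, join zero x = x;
  meet1x : forall x, meet one x = x;
  negK : forall x, neg (neg x) = x;
  neg_join : forall x y, neg (join x y) = meet (neg x) (neg y);
  pcP : forall x y, meet x y = zero <-> meet y (pc x) = y;
  modal : forall x, meet (join x (neg x)) (join x (pc x)) = join x (neg x)
}.

Definition le (A : mpM) (x y : A) : Prop := meet A x y = x.

Definition mpM_automorphism (A : mpM) (t : A -> A) : Prop :=
  (exists g : A -> A, (forall x, g (t x) = x) /\ (forall x, t (g x) = x)) /\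
  (forall x y, t (meet A x y) = meet A (t x) (t y)) /\
  (forall x y, t (join A x y) = join A (t x) (t y)) /\
  (forall x, t (neg A x) = neg A (t x)) /\
  (forall x, t (pc A x) = pc A (t x)) /\
  t (zero A) = zero A /\ t (one A) = one A.

Fixpoint iterf {X : Type} (n : nat) (f : X -> X) (x : X) : X :=
  match n with O => x | S m => f (iterf m f x) end.

Record Ck_algebra (k : nat) := CkAlg {
  alg :> mpM;
  tau : alg -> alg;
  tau_aut : mpM_automorphism alg tau;
  tau_k : forall x, iterf k tau x = x
}.
Arguments alg {k}.
Arguments tau {k}.

Inductive formula : Type :=
| FVar : nat -> formula
| FAnd : formula -> formula -> formula
| FOr : formula -> formula -> formula
| FNeg : formula -> formula
| FStar : formula -> formula
| FT : formula -> formula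
| FTop : formula
| FBot : formula.

Fixpoint eval {k} (C : Ck_algebra k) (v : nat -> C) (f : formula) : C :=
  match f with
  | FVar n => v n
  | FAnd a b => meet C (eval C v a) (eval C v b)
  | FOr a b => join C (eval C v a) (eval C v b)
  | FNeg a => neg C (eval C v a)
  | FStar a => pc C (eval C v a)
  | FT a => tau C (eval C v a)
  | FTop => one C
  | FBot => zero C
  end.

Definition entails (k : nat) (G : list formula) (a : formula) : Prop :=
  match G with
  | [] => forall (C : Ck_algebra k) (v : nat -> C), eval C v a = one C
  | _ => forall (C : Ck_algebra k) (v : nat -> C) (x : C),
           (forall b, In b G -> le C x (eval C v b)) -> le C x (eval C v a)
  end.

Fixpoint bigAnd (n : nat) (F : nat -> formula) : formula :=
  match n with
  | O => F O
  | S m => FAnd (bigAnd m F) (F (S m))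
  end.

Definition circ (k : nat) (a : formula) : formula :=
  bigAnd k (fun i => iterf i FT
              (FAnd (FOr (FNeg a) a) (FStar (FAnd a (FNeg a))))).

(* Main.v *)
Require Import Defs.
From Stdlib Require Import List.
Import ListNotations.

Inductive three := Z | H | O.
Definition tmeet a b := match a, b with
  | Z, _ => Z | _, Z => Z | H, _ => H | _, H => H | O, O => O end.
Definition tjoin a b := match a, b with
  | O, _ => O | _, O => O | H, _ => H | _, H => H | Z, Z => Z end.
Definition tneg a := match a with Z => O | H => H | O => Z end.
Definition tpc a := match a with Z => O | _ => Z end.

Definition T3 : mpM.
Proof.
  refine (MpM three tmeet tjoin tneg tpc Z O _ _ _ _ _ _ _ _ _ _ _ _ _);
  intros; repeat match goal with x : three |- _ => destruct x end;
  simpl; try reflexivity; split; intro; try reflexivity; discriminate.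
Defined.

Lemma iter_id (A : Type) k (x : A) : iterf k (fun y => y) x = x.
Proof. induction k; simpl; auto. Qed.

Definition C3 (k : nat) : Ck_algebra k.
Proof.
  refine (CkAlg k T3 (fun y => y) _ (iter_id _ k)).
  repeat split; try reflexivity. exists (fun y => y); split; reflexivity.
Defined.

Lemma eval_iterFT k v i f : eval (C3 k) v (iterf i FT f) = eval (C3 k) v f.
Proof. induction i; simpl; auto. Qed.

Lemma eval_bigAnd k v n F :
  (forall i, eval (C3 k) v (F i) = O) -> eval (C3 k) v (bigAnd n F) = O.
Proof. intro HF; induction n; simpl; [apply HF|]. rewrite IHn, HF; reflexivity. Qed.

Lemma le_trans (A : mpM) (x y z : A) : le A x y -> le A y z -> le A x z.
Proof. unfold le; intros H1 H2. rewrite <- H1, <- meetA, H2; reflexivity. Qed.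

Lemma meet_idem (A : mpM) (x : A) : meet A x x = x.
Proof.
  transitivity (meet A x (join A x (meet A x x))).
  - rewrite join_absorb; reflexivity.
  - apply meet_absorb.
Qed.

Lemma meet_le_l (A : mpM) (x y : A) : le A (meet A x y) x.
Proof.
  unfold le. rewrite (meetC A (meet A x y) x), meetA, meet_idem; reflexivity.
Qed.

Lemma meet_le_r (A : mpM) (x y : A) : le A (meet A x y) y.
Proof. rewrite meetC; apply meet_le_l. Qed.

Lemma bigAnd_le k (C : Ck_algebra k) v n F :
  le C (eval C v (bigAnd n F)) (eval C v (F 0)).
Proof.
  induction n; simpl.
  - unfold le. rewrite <- (join_absorb C (eval C v (F 0)) (eval C v (F 0))) at 2.
    apply meet_absorb.
  - eapply le_trans; [apply meet_le_l|exact IHn].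
Qed.

Theorem lemma6p5 (k : nat) (hk : 1 <= k) :
  (forall p : nat, ~ entails k [] (FOr (FVar p) (FNeg (FVar p)))) /\
  (forall p : nat, ~ entails k [circ k (FVar p)] (FVar p) /\
                   ~ entails k [circ k (FVar p)] (FNeg (FVar p))) /\
  (forall a : formula, entails k [circ k a] (FOr a (FNeg a))).
Proof.
  split; [|split].
  - intros p Hp. specialize (Hp (C3 k) (fun _ => H)). simpl in Hp. discriminate.
  - intro p; split; intro Hp.
    + specialize (Hp (C3 k) (fun _ => Z) O). simpl in Hp.
      assert (HH : le T3 O Z) by (apply Hp; intros b [<-|[]];
        unfold le, circ; rewrite (eval_bigAnd k); [reflexivity|];
        intro i; rewrite eval_iterFT; reflexivity).
      discriminate.
    + specialize (Hp (C3 k) (fun _ => O) O). simpl in Hp.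
      assert (HH : le T3 O Z) by (apply Hp; intros b [<-|[]];
        unfold le, circ; rewrite (eval_bigAnd k); [reflexivity|];
        intro i; rewrite eval_iterFT; reflexivity).
      discriminate.
  - intros a C v x Hx. simpl in Hx.
    assert (H1 := Hx _ (or_introl eq_refl)).
    eapply le_trans; [exact H1|]. unfold circ.
    eapply le_trans; [apply bigAnd_le|]. simpl.
    eapply le_trans; [apply meet_le_l|]. rewrite joinC.
    unfold le. apply meet_idem.
Qed.
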